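(* Let $h_1,h_2,g_1,g_2>0$ be real numbers. For $\Delta_1,\Delta_2>0$ and $\Omega\subseteq\{1,2\}$ define (logarithms base $2$, $[x]^+=\max\{x,0\}$) \begin{align*} R(\emptyset;\Delta_1,\Delta_2)&=\Big[\log\Big(1+\tfrac{h_1^2}{1+\Delta_1}+\tfrac{h_2^2}{1+\Delta_2}\Big)\Big]^+,\\ R(\{1\};\Delta_1,\Delta_2)&=\Big[\log(1+g_1^2)+\log\Big(1+\tfrac{h_2^2}{1+\Delta_2}\Big)-\log\tfrac{1+\Delta_1}{\Delta_1}\Big]^+,\\ R(\{2\};\Delta_1,\Delta_2)&=\Big[\log(1+g_2^2)+\log\Big(1+\tfrac{h_1^2}{1+\Delta_1}\Big)-\log\tfrac{1+\Delta_2}{\Delta_2}\Big]^+,\\ R(\{1,2\};\Delta_1,\Delta_2)&=\Big[\log(1+g_1^2+g_2^2)-\log\tfrac{1+\Delta_1}{\Delta_1}-\log\tfrac{1+\Delta_2}{\Delta_2}\Big]^+, \end{align*} and consider the problem $\max_{\Delta_2>0}\max_{\Delta_1>0}\min_{\Omega\subseteq\{1,2\}}R(\Omega;\Delta_1,\Delta_2)$. Let $$\delta_1:=\frac{(1+g_1^2+g_2^2)(1+h_1^2+h_2^2)+(1+g_2^2)h_1^2h_2^2}{g_2^2(1+g_1^2+g_2^2)(1+h_1^2)},\qquad \delta_2:=\frac{(1+g_1^2)(1+h_2^2)}{g_2^2},$$ $\mathcal I_1=(0,\delta_1)$, $\mathcal I_2=[\delta_1,\delta_2)$, $\mathcal I_3=[\delta_2,\infty)$,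 and $A:=h_1^2(1+h_1^2)-h_2^2(1+h_1^2+g_1^2+g_2^2)$, $B:=2h_1^2(1+h_1^2)$, $C:=h_1^2(1+h_1^2+h_2^2)$, $\delta_3:=\frac{-B-\sqrt{B^2-4AC}}{2A}$. Then an optimal solution $(\Delta_1^*,\Delta_2^* )$ of this problem is: \begin{enumerate} \item if $A\ge 0$ or $\delta_3\in\mathcal I_3$: $\Delta_2^*=\delta_2$ and $\Delta_1^*=\frac{(1+h_1^2)\delta_2+(1+h_1^2+h_2^2)}{(g_1^2+g_2^2)\delta_2-(1+h_2^2)}=\frac{(1+h_1^2)\delta_2+(1+h_1^2+h_2^2)}{g_1^2(\delta_2+(1+h_2^2))}$; \item if $A<0$ and $\delta_3\in\mathcal I_1$: $\Delta_2^*=\delta_1$ and $\Delta_1^*=\frac{(1+h_1^2)\delta_1+(1+h_1^2+h_2^2)}{(g_1^2+g_2^2)\delta_1-(1+h_2^2)}=\frac{(1+g_2^2)(1+h_1^2)}{g_1^2}$; \item if $A<0$ and $\delta_3\in\mathcal I_2$: $\Delta_2^*=\delta_3$ and $\Delta_1^*=\frac{(1+h_1^2)\delta_3+(1+h_1^2+h_2^2)}{(g_1^2+g_2^2)\delta_3-(1+h_2^2)}$. \end{enumerate}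
   Context: This concerns the full-duplex two-relay Gaussian diamond network (source, relays $A_1,A_2$, destination) with channel magnitudes $h_i$ (source to relay $i$) and $g_i$ (relay $i$ to destination), in which relay $i$ performs quantize-map-and-forward with a Gaussian vector quantizer of distortion $\Delta_i$; $\min_\Omega R(\Omega;\Delta_1,\Delta_2)$ is the resulting achievable rate, and the problem is to choose the distortions maximizing it given the channel magnitudes. *)

(* Defs.v *)
From Stdlib Require Import Reals.
Open Scope R_scope.

Definition log2 (x : R) : R := ln x / ln 2.
Definition pos_part (x : R) : R := Rmax x 0.

(* Omega ⊆ {1,2} encoded as (1 ∈ Omega, 2 ∈ Omega). *)
Definition rate (h1 h2 g1 g2 : R) (Om : bool * bool) (D1 D2 : R) : R :=
  match Om with
  | (false, false) =>
      pos_part (log2 (1 + h1^2 / (1 + D1) + h2^2 / (1 + D2)))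
  | (true, false) =>
      pos_part (log2 (1 + g1^2) + log2 (1 + h2^2 / (1 + D2))
                - log2 ((1 + D1) / D1))
  | (false, true) =>
      pos_part (log2 (1 + g2^2) + log2 (1 + h1^2 / (1 + D1))
                - log2 ((1 + D2) / D2))
  | (true, true) =>
      pos_part (log2 (1 + g1^2 + g2^2) - log2 ((1 + D1) / D1)
                - log2 ((1 + D2) / D2))
  end.

Definition min_rate (h1 h2 g1 g2 D1 D2 : R) : R :=
  Rmin (Rmin (rate h1 h2 g1 g2 (false, false) D1 D2)
             (rate h1 h2 g1 g2 (true, false) D1 D2))
       (Rmin (rate h1 h2 g1 g2 (false, true) D1 D2)
             (rate h1 h2 g1 g2 (true, true) D1 D2)).

Definition is_optimal (h1 h2 g1 g2 D1 D2 : R) : Prop :=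
  0 < D1 /\ 0 < D2 /\
  forall E1 E2, 0 < E1 -> 0 < E2 ->
    min_rate h1 h2 g1 g2 E1 E2 <= min_rate h1 h2 g1 g2 D1 D2.

Definition delta1 (h1 h2 g1 g2 : R) : R :=
  ((1 + g1^2 + g2^2) * (1 + h1^2 + h2^2) + (1 + g2^2) * h1^2 * h2^2)
  / (g2^2 * (1 + g1^2 + g2^2) * (1 + h1^2)).
Definition delta2 (h1 h2 g1 g2 : R) : R :=
  (1 + g1^2) * (1 + h2^2) / g2^2.
Definition coefA (h1 h2 g1 g2 : R) : R :=
  h1^2 * (1 + h1^2) - h2^2 * (1 + h1^2 + g1^2 + g2^2).
Definition coefB (h1 : R) : R := 2 * h1^2 * (1 + h1^2).
Definition coefC (h1 h2 : R) : R := h1^2 * (1 + h1^2 + h2^2).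
Definition delta3 (h1 h2 g1 g2 : R) : R :=
  (- coefB h1 - sqrt (coefB h1 ^ 2 - 4 * coefA h1 h2 g1 g2 * coefC h1 h2))
  / (2 * coefA h1 h2 g1 g2).

Definition D1_of (h1 h2 g1 g2 d : R) : R :=
  ((1 + h1^2) * d + (1 + h1^2 + h2^2)) / ((g1^2 + g2^2) * d - (1 + h2^2)).

(* Main.v *)
Require Import Defs.
From Stdlib Require Import Reals Lra Psatz.
Open Scope R_scope.

Definition T0 H1 H2 a b := 1 + H1*(1-a) + H2*(1-b).
Definition T1 H2 G1 a b := (1+G1)*(1+H2*(1-b))*a.
Definition T2 H1 G2 a b := (1+G2)*(1+H1*(1-a))*b.
Definition T12 G1 G2 a b := (1+G1+G2)*a*b.

Lemma curve_bound H1 H2 G1 G2 ap bp a b :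
  0 < H1 -> 0 < H2 -> 0 <= G1 -> 0 <= G2 -> 0 < a -> 0 < b -> 0 < ap -> 0 < bp ->
  T0 H1 H2 ap bp = T12 G1 G2 ap bp ->
  ((b <= bp /\ H2*bp <= H1*ap) \/ (bp <= b /\ H1*ap <= H2*bp)) ->
  T0 H1 H2 a b <= T12 G1 G2 ap bp \/ T12 G1 G2 a b <= T12 G1 G2 ap bp.
Proof.
  unfold T0, T12; intros HH1 HH2 HG1 HG2 Ha Hb Hap Hbp Hc Hs.
  destruct (Rle_dec (1 + H1 * (1 - a) + H2 * (1 - b)) ((1 + G1 + G2) * ap * bp)) as [h|h];
   [left; exact h|right].
  apply Rnot_le_lt in h.
  destruct (Rle_dec ((1 + G1 + G2) * a * b) ((1 + G1 + G2) * ap * bp)) as [h'|h']; [exact h'|].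
  exfalso. apply Rnot_le_lt in h'.
  assert (hab : ap*bp < a*b).
  { apply (Rmult_lt_reg_l (1+G1+G2)); [lra|]. lra. }
  assert (key : (b - bp)*(H1*ap - H2*b) <= 0).
  { destruct Hs as [[h1 h2]|[h1 h2]].
    - assert (0 <= (bp - b)*(H1*ap - H2*b)) by (apply Rmult_le_pos; nra). nra.
    - assert (0 <= (b - bp)*(H2*b - H1*ap)) by (apply Rmult_le_pos; nra). nra. }
  nra.
Qed.

Definition bnd H1 H2 G1 G2 V a b :=
  T0 H1 H2 a b <= V \/ T1 H2 G1 a b <= V \/ T2 H1 G2 a b <= V \/ T12 G1 G2 a b <= V.

Lemma case1_ab H1 H2 G1 G2 ap bp a b :
  0 < H1 -> 0 < H2 -> 0 <= G1 -> 0 <= G2 -> 0 < a -> 0 < b -> 0 < ap -> 0 < bp ->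
  T0 H1 H2 ap bp = T12 G1 G2 ap bp ->
  T1 H2 G1 ap bp = T12 G1 G2 ap bp ->
  H2*bp <= H1*ap ->
  bnd H1 H2 G1 G2 (T12 G1 G2 ap bp) a b.
Proof.
  intros HH1 HH2 HG1 HG2 Ha Hb Hap Hbp Hc Hq Hs.
  unfold bnd.
  destruct (Rle_dec b bp) as [hb|hb].
  - destruct (curve_bound H1 H2 G1 G2 ap bp a b) as [h|h]; auto; tauto.
  - apply Rnot_le_lt in hb.
    assert (he : (1+G1)*(1+H2*(1-bp)) = (1+G1+G2)*bp).
    { unfold T1, T12 in Hq. apply (Rmult_eq_reg_r ap); [|lra]. lra. }
    destruct (curve_bound H1 H2 G1 G2 ap bp a bp) as [h|h]; auto; try lra.
    + left. unfold T0 in *. nra.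
    + right; left. unfold T1, T12 in *.
      assert (T1 H2 G1 a b <= T1 H2 G1 a bp).
      { unfold T1. apply Rmult_le_compat_r; [lra|]. apply Rmult_le_compat_l; nra. }
      unfold T1 in H. nra.
Qed.

Lemma case2_ab H1 H2 G1 G2 ap bp a b :
  0 < H1 -> 0 < H2 -> 0 <= G1 -> 0 <= G2 -> 0 < a -> 0 < b -> 0 < ap -> 0 < bp ->
  T0 H1 H2 ap bp = T12 G1 G2 ap bp ->
  T2 H1 G2 ap bp = T12 G1 G2 ap bp ->
  H1*ap <= H2*bp ->
  bnd H1 H2 G1 G2 (T12 G1 G2 ap bp) a b.
Proof.
  intros HH1 HH2 HG1 HG2 Ha Hb Hap Hbp Hc Hq Hs.
  assert (e0 : forall x y, T0 H2 H1 y x = T0 H1 H2 x y) by (intros; unfold T0; ring).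
  assert (e12 : forall x y, T12 G2 G1 y x = T12 G1 G2 x y) by (intros; unfold T12; ring).
  pose proof (case1_ab H2 H1 G2 G1 bp ap b a HH2 HH1 HG2 HG1 Hb Ha Hbp Hap) as C.
  assert (Hc' : T0 H2 H1 bp ap = T12 G2 G1 bp ap) by (rewrite e0, e12; exact Hc).
  assert (Hq' : T1 H1 G2 bp ap = T12 G2 G1 bp ap) by (rewrite e12; exact Hq).
  specialize (C Hc' Hq' Hs). unfold bnd in *. rewrite !e0, !e12 in C.
  change (T1 H1 G2 b a) with (T2 H1 G2 a b) in C.
  change (T2 H2 G1 b a) with (T1 H2 G1 a b) in C.
  lra.
Qed.

Lemma case3_ab H1 H2 G1 G2 ap bp a b :
  0 < H1 -> 0 < H2 -> 0 <= G1 -> 0 <= G2 -> 0 < a -> 0 < b -> 0 < ap -> 0 < bp ->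
  T0 H1 H2 ap bp = T12 G1 G2 ap bp ->
  H1*ap = H2*bp ->
  bnd H1 H2 G1 G2 (T12 G1 G2 ap bp) a b.
Proof.
  intros. unfold bnd.
  assert (HS : (b <= bp /\ H2*bp <= H1*ap) \/ (bp <= b /\ H1*ap <= H2*bp)).
  { destruct (Rle_dec b bp); [left|right]; lra. }
  destruct (curve_bound H1 H2 G1 G2 ap bp a b) as [h|h]; auto.
Qed.

Lemma ln2_pos : 0 < ln 2.
Proof. rewrite <- ln_1. apply ln_increasing; lra. Qed.

Lemma log2_mult x y : 0 < x -> 0 < y -> log2 (x*y) = log2 x + log2 y.
Proof. intros. unfold log2. rewrite ln_mult by auto. pose proof ln2_pos. field. lra. Qed.

Lemma log2_le x y : 0 < x -> x <= y -> log2 x <= log2 y.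
Proof.
  intros hx hxy. unfold log2. pose proof ln2_pos.
  destruct (Req_dec x y) as [->|hne]; [lra|].
  assert (ln x < ln y) by (apply ln_increasing; lra).
  unfold Rdiv. apply Rmult_le_compat_r; [left; apply Rinv_0_lt_compat; lra|lra].
Qed.

Lemma pp_le x y : 0 < x -> x <= y -> pos_part (log2 x) <= pos_part (log2 y).
Proof.
  intros hx hxy. pose proof (log2_le x y hx hxy). unfold pos_part, Rmax.
  destruct (Rle_dec (log2 x) 0); destruct (Rle_dec (log2 y) 0); lra.
Qed.

Lemma log2_inv D : 0 < D -> log2 ((1+D)/D) = - log2 (D/(1+D)).
Proof.
  intros. replace ((1+D)/D) with (/ (D/(1+D))) by (field; lra).
  unfold log2. rewrite ln_Rinv. field. pose proof ln2_pos; lra.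
  apply Rdiv_lt_0_compat; lra.
Qed.

Section S.
Lemma rates h1 h2 g1 g2 D1 D2 : 0 < D1 -> 0 < D2 ->
  let a := D1/(1+D1) in let b := D2/(1+D2) in
  rate h1 h2 g1 g2 (false,false) D1 D2 = pos_part (log2 (T0 (h1^2) (h2^2) a b)) /\
  rate h1 h2 g1 g2 (true,false) D1 D2 = pos_part (log2 (T1 (h2^2) (g1^2) a b)) /\
  rate h1 h2 g1 g2 (false,true) D1 D2 = pos_part (log2 (T2 (h1^2) (g2^2) a b)) /\
  rate h1 h2 g1 g2 (true,true) D1 D2 = pos_part (log2 (T12 (g1^2) (g2^2) a b)).
Proof.
  intros HD1 HD2 a b.
  assert (p1 : 0 <= h1^2) by (apply pow2_ge_0).
  assert (p2 : 0 <= h2^2) by (apply pow2_ge_0).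
  assert (q1 : 0 <= g1^2) by (apply pow2_ge_0).
  assert (q2 : 0 <= g2^2) by (apply pow2_ge_0).
  assert (ha : 0 < a) by (apply Rdiv_lt_0_compat; lra).
  assert (hb : 0 < b) by (apply Rdiv_lt_0_compat; lra).
  assert (e1 : 1 - a = / (1+D1)) by (unfold a; field; lra).
  assert (e2 : 1 - b = / (1+D2)) by (unfold b; field; lra).
  assert (r1 : 0 < / (1+D1)) by (apply Rinv_0_lt_compat; lra).
  assert (r2 : 0 < / (1+D2)) by (apply Rinv_0_lt_compat; lra).
  unfold rate, T0, T1, T2, T12. rewrite e1, e2, !log2_inv by lra. fold a b.
  split; [|split; [|split]]; f_equal; unfold Rdiv.
  - rewrite !log2_mult; try nra; try lra; apply Rmult_lt_0_compat; nra.
  - rewrite !log2_mult; try nra; try lra; apply Rmult_lt_0_compat; nra.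
  - rewrite !log2_mult; try nra; try lra; apply Rmult_lt_0_compat; nra.
Qed.
End S.

Lemma final h1 h2 g1 g2 D1 D2 : 0 < D1 -> 0 < D2 ->
  let ap := D1/(1+D1) in let bp := D2/(1+D2) in
  let V := T12 (g1^2) (g2^2) ap bp in
  V <= T0 (h1^2) (h2^2) ap bp -> V <= T1 (h2^2) (g1^2) ap bp ->
  V <= T2 (h1^2) (g2^2) ap bp ->
  (forall a b, 0 < a -> a < 1 -> 0 < b -> b < 1 -> bnd (h1^2) (h2^2) (g1^2) (g2^2) V a b) ->
  is_optimal h1 h2 g1 g2 D1 D2.
Proof.
  intros HD1 HD2 ap bp V h0 h1' h2' HB.
  assert (p1 : 0 <= h1^2) by (apply pow2_ge_0).
  assert (p2 : 0 <= h2^2) by (apply pow2_ge_0).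
  assert (q1 : 0 <= g1^2) by (apply pow2_ge_0).
  assert (q2 : 0 <= g2^2) by (apply pow2_ge_0).
  split; [|split]; auto. intros E1 E2 HE1 HE2.
  assert (hap : 0 < ap) by (apply Rdiv_lt_0_compat; lra).
  assert (hbp : 0 < bp) by (apply Rdiv_lt_0_compat; lra).
  assert (hV : 0 < V) by (unfold V, T12; apply Rmult_lt_0_compat; [apply Rmult_lt_0_compat|]; lra).
  set (a := E1/(1+E1)). set (b := E2/(1+E2)).
  assert (ha : 0 < a) by (apply Rdiv_lt_0_compat; lra).
  assert (hb : 0 < b) by (apply Rdiv_lt_0_compat; lra).
  assert (ha1 : a < 1) by (unfold a; apply Rmult_lt_reg_r with (1+E1); [lra|]; field_simplify; lra).
  assert (hb1 : b < 1) by (unfold b; apply Rmult_lt_reg_r with (1+E2); [lra|]; field_simplify; lra).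
  destruct (rates h1 h2 g1 g2 E1 E2 HE1 HE2) as [r0 [r1 [r2 r12]]].
  destruct (rates h1 h2 g1 g2 D1 D2 HD1 HD2) as [s0 [s1 [s2 s12]]].
  fold a b in r0, r1, r2, r12. fold ap bp in s0, s1, s2, s12.
  unfold min_rate. rewrite r0, r1, r2, r12, s0, s1, s2, s12.
  apply Rle_trans with (pos_part (log2 V)).
  - assert (t0 : 0 < T0 (h1^2) (h2^2) a b) by (unfold T0; nra).
    assert (t1 : 0 < T1 (h2^2) (g1^2) a b) by (unfold T1; apply Rmult_lt_0_compat; [apply Rmult_lt_0_compat|]; nra).
    assert (t2 : 0 < T2 (h1^2) (g2^2) a b) by (unfold T2; apply Rmult_lt_0_compat; [apply Rmult_lt_0_compat|]; nra).
    assert (t12 : 0 < T12 (g1^2) (g2^2) a b) by (unfold T12; apply Rmult_lt_0_compat; [apply Rmult_lt_0_compat|]; nra).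
    destruct (HB a b ha ha1 hb hb1) as [k|[k|[k|k]]].
    + eapply Rle_trans; [apply Rmin_l|]. eapply Rle_trans; [apply Rmin_l|]. apply pp_le; auto.
    + eapply Rle_trans; [apply Rmin_l|]. eapply Rle_trans; [apply Rmin_r|]. apply pp_le; auto.
    + eapply Rle_trans; [apply Rmin_r|]. eapply Rle_trans; [apply Rmin_l|]. apply pp_le; auto.
    + eapply Rle_trans; [apply Rmin_r|]. eapply Rle_trans; [apply Rmin_r|]. apply pp_le; auto.
  - apply Rmin_glb; apply Rmin_glb; apply pp_le; auto; fold V; lra.
Qed.

Lemma pt H1 H2 G1 G2 d : 0 < H1 -> 0 < H2 -> 0 < G1 -> 0 < G2 -> 0 < d ->
  0 < (G1+G2)*d - (1+H2) ->
  let D := ((1+H1)*d + (1+H1+H2))/((G1+G2)*d - (1+H2)) in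
  let ap := D/(1+D) in let bp := d/(1+d) in
  0 < D /\ T0 H1 H2 ap bp = T12 G1 G2 ap bp /\
  H1*ap - H2*bp = ((H1*(1+H1) - H2*(1+H1+G1+G2)) * d^2 + 2*H1*(1+H1)*d + H1*(1+H1+H2))
                   / (((1+H1+G1+G2)*d + H1)*(1+d)) /\
  T1 H2 G1 ap bp - T12 G1 G2 ap bp = ap*((1+G1)*(1+H2) - G2*d)/(1+d) /\
  T2 H1 G2 ap bp - T12 G1 G2 ap bp = bp*((1+G2)*(1+H1) - G1*D)/(1+D).
Proof.
  intros h1 h2 g1 g2 hd hM D ap bp.
  assert (hD : 0 < D) by (unfold D; apply Rdiv_lt_0_compat; nra).
  set (M := (G1+G2)*d - (1+H2)) in *.
  assert (eD : D * M = (1+H1)*d + (1+H1+H2)) by (unfold D; field; lra).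
  assert (eap : ap * (1+D) = D) by (unfold ap; field; lra).
  assert (ebp : bp * (1+d) = d) by (unfold bp; field; lra).
  split; [exact hD|].
  split; [|split; [|split]].
  - unfold T0, T12, ap, bp, D, M. field. unfold M in hM. repeat split; intro; nra.
  - unfold ap, bp, D, M. field. unfold M in hM. repeat split; intro; nra.
  - unfold T1, T12, bp. field; lra.
  - unfold T2, T12, ap. field; lra.
Qed.

Lemma Rdiv_le_0_compat x y : 0 <= x -> 0 < y -> 0 <= x / y.
Proof. intros. unfold Rdiv. apply Rmult_le_pos; [auto|left; apply Rinv_0_lt_compat; auto]. Qed.

Lemma wrap h1 h2 g1 g2 d : 0 < h1 -> 0 < h2 -> 0 < g1 -> 0 < g2 -> 0 < d ->
  0 < (g1^2+g2^2)*d - (1+h2^2) ->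
  let D := D1_of h1 h2 g1 g2 d in
  let P := (h1^2*(1+h1^2) - h2^2*(1+h1^2+g1^2+g2^2)) * d^2 + 2*h1^2*(1+h1^2)*d
           + h1^2*(1+h1^2+h2^2) in
  (0 <= P /\ g2^2*d = (1+g1^2)*(1+h2^2) /\ g1^2*D <= (1+g2^2)*(1+h1^2)) \/
  (P <= 0 /\ g1^2*D = (1+g2^2)*(1+h1^2) /\ g2^2*d <= (1+g1^2)*(1+h2^2)) \/
  (P = 0 /\ g2^2*d <= (1+g1^2)*(1+h2^2) /\ g1^2*D <= (1+g2^2)*(1+h1^2)) ->
  is_optimal h1 h2 g1 g2 D d.
Proof.
  intros hh1 hh2 hg1 hg2 hd hM D P Hc.
  assert (H1p : 0 < h1^2) by (apply pow_lt; lra).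
  assert (H2p : 0 < h2^2) by (apply pow_lt; lra).
  assert (G1p : 0 < g1^2) by (apply pow_lt; lra).
  assert (G2p : 0 < g2^2) by (apply pow_lt; lra).
  destruct (pt (h1^2) (h2^2) (g1^2) (g2^2) d H1p H2p G1p G2p hd hM) as [hD [hc [hs [ht1 ht2]]]].
  fold (D1_of h1 h2 g1 g2 d) in hD, hc, hs, ht1, ht2. fold D in hD, hc, hs, ht1, ht2.
  fold P in hs.
  set (H1 := h1^2) in *. set (H2 := h2^2) in *. set (G1 := g1^2) in *. set (G2 := g2^2) in *.
  set (ap := D/(1+D)) in *. set (bp := d/(1+d)) in *.
  assert (hap : 0 < ap) by (apply Rdiv_lt_0_compat; lra).
  assert (hbp : 0 < bp) by (apply Rdiv_lt_0_compat; lra).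
  assert (den : 0 < ((1+H1+G1+G2)*d + H1)*(1+d)) by nra.
  assert (X1 : G2*d <= (1+G1)*(1+H2) -> T12 G1 G2 ap bp <= T1 H2 G1 ap bp).
  { intro k. assert (0 <= ap*((1+G1)*(1+H2) - G2*d)/(1+d)).
    { apply Rdiv_le_0_compat; [apply Rmult_le_pos|]; lra. } lra. }
  assert (X2 : G1*D <= (1+G2)*(1+H1) -> T12 G1 G2 ap bp <= T2 H1 G2 ap bp).
  { intro k. assert (0 <= bp*((1+G2)*(1+H1) - G1*D)/(1+D)).
    { apply Rdiv_le_0_compat; [apply Rmult_le_pos|]; lra. } lra. }
  assert (Y1 : 0 <= P -> H2*bp <= H1*ap).
  { intro k. assert (0 <= P / (((1+H1+G1+G2)*d + H1)*(1+d))) by (apply Rdiv_le_0_compat; lra). lra. }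
  assert (Y2 : P <= 0 -> H1*ap <= H2*bp).
  { intro k. assert (0 <= (-P) / (((1+H1+G1+G2)*d + H1)*(1+d))) by (apply Rdiv_le_0_compat; lra).
    unfold Rdiv in *. lra. }
  apply final; auto; fold H1 H2 G1 G2; fold ap bp.
  - rewrite hc; lra.
  - destruct Hc as [[k1 [k2 k3]]|[[k1 [k2 k3]]|[k1 [k2 k3]]]]; apply X1; lra.
  - destruct Hc as [[k1 [k2 k3]]|[[k1 [k2 k3]]|[k1 [k2 k3]]]]; apply X2; lra.
  - intros a b ha ha1 hb hb1.
    destruct Hc as [[k1 [k2 k3]]|[[k1 [k2 k3]]|[k1 [k2 k3]]]].
    + apply case1_ab; auto; try lra.
      assert (0 <= ap*((1+G1)*(1+H2) - G2*d)/(1+d)) by (apply Rdiv_le_0_compat; [apply Rmult_le_pos|]; lra).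
      assert (ap*((1+G1)*(1+H2) - G2*d)/(1+d) = 0) by (rewrite k2; unfold Rdiv; ring). lra.
    + apply case2_ab; auto; try lra.
      assert (bp*((1+G2)*(1+H1) - G1*D)/(1+D) = 0) by (rewrite k2; unfold Rdiv; ring). lra.
    + apply case3_ab; auto; try lra.
      all: try (assert (P / (((1+H1+G1+G2)*d + H1)*(1+d)) = 0) by (rewrite k1; unfold Rdiv; ring); lra).
Qed.

Lemma quad A B C : A < 0 -> 0 < B -> 0 < C ->
  let r := (- B - sqrt (B ^ 2 - 4 * A * C)) / (2 * A) in
  0 < r /\ A*r^2 + B*r + C = 0 /\
  (forall x, 0 < x -> x <= r -> 0 <= A*x^2 + B*x + C) /\
  (forall x, r <= x -> A*x^2 + B*x + C <= 0).
Proof.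
  intros hA hB hC r.
  assert (hdisc : 0 <= B^2 - 4*A*C) by nra.
  set (s := sqrt (B^2 - 4*A*C)) in *.
  assert (ss : s*s = B^2 - 4*A*C) by (apply sqrt_sqrt; auto).
  assert (s0 : 0 <= s) by apply sqrt_pos.
  assert (sB : B < s) by nra.
  assert (er : 2*A*r = - B - s) by (unfold r; field; lra).
  assert (P0 : A*r^2 + B*r + C = 0).
  { apply (Rmult_eq_reg_l (4*A)); [|lra]. 
    replace (4*A*(A*r^2+B*r+C)) with ((2*A*r)^2 + 2*B*(2*A*r) + 4*A*C) by ring.
    rewrite er. nra. }
  assert (rp : 0 < r).
  { assert (0 < (2*A*r) * (2*A)) by (rewrite er; nra). nra. }
  split; [auto|split; [auto|split]].
  - intros x hx hxr.
    assert (e : A*x^2+B*x+C = (x - r)*(A*(x+r)+B)) by (replace (A*x^2+B*x+C) with ((x - r)*(A*(x+r)+B) + (A*r^2+B*r+C)) by ring; rewrite P0; ring).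
    rewrite e. assert (2*(A*(x+r)+B) < 0) by nra. nra.
  - intros x hxr.
    assert (e : A*x^2+B*x+C = (x - r)*(A*(x+r)+B)) by (replace (A*x^2+B*x+C) with ((x - r)*(A*(x+r)+B) + (A*r^2+B*r+C)) by ring; rewrite P0; ring).
    rewrite e. assert (2*(A*(x+r)+B) < 0) by nra. nra.
Qed.

Ltac pos := repeat (apply Rplus_lt_0_compat || apply Rmult_lt_0_compat || apply Rdiv_lt_0_compat || apply Rinv_0_lt_compat); try lra.

Theorem theorem1 (h1 h2 g1 g2 : R) :
  0 < h1 -> 0 < h2 -> 0 < g1 -> 0 < g2 ->
  let d1 := delta1 h1 h2 g1 g2 in
  let d2 := delta2 h1 h2 g1 g2 in
  let d3 := delta3 h1 h2 g1 g2 in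
  let A := coefA h1 h2 g1 g2 in
  ((0 <= A \/ d2 <= d3) ->
     is_optimal h1 h2 g1 g2 (D1_of h1 h2 g1 g2 d2) d2 /\
     D1_of h1 h2 g1 g2 d2 =
       ((1 + h1^2) * d2 + (1 + h1^2 + h2^2)) / (g1^2 * (d2 + (1 + h2^2)))) /\
  ((A < 0 /\ 0 < d3 /\ d3 < d1) ->
     is_optimal h1 h2 g1 g2 (D1_of h1 h2 g1 g2 d1) d1 /\
     D1_of h1 h2 g1 g2 d1 = (1 + g2^2) * (1 + h1^2) / g1^2) /\
  ((A < 0 /\ d1 <= d3 /\ d3 < d2) ->
     is_optimal h1 h2 g1 g2 (D1_of h1 h2 g1 g2 d3) d3).
Proof.
  intros hh1 hh2 hg1 hg2 d1 d2 d3 A.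
  assert (H1p : 0 < h1^2) by (apply pow_lt; lra).
  assert (H2p : 0 < h2^2) by (apply pow_lt; lra).
  assert (G1p : 0 < g1^2) by (apply pow_lt; lra).
  assert (G2p : 0 < g2^2) by (apply pow_lt; lra).
  pose proof (wrap h1 h2 g1 g2) as W.
  assert (Bp : 0 < coefB h1) by (unfold coefB; nra).
  assert (Cp : 0 < coefC h1 h2) by (unfold coefC; nra).
  pose proof (quad A (coefB h1) (coefC h1 h2)) as Q.
  change ((- coefB h1 - sqrt (coefB h1 ^ 2 - 4 * A * coefC h1 h2)) / (2 * A)) with d3 in Q.
  unfold coefB, coefC in Q, Bp, Cp.
  unfold D1_of in *. unfold A, coefA in *. clear A.
  unfold d1, delta1 in *. unfold d2, delta2 in *. clear d1 d2.
  set (H1 := h1^2) in *. set (H2 := h2^2) in *. set (G1 := g1^2) in *. set (G2 := g2^2) in *.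
  set (d1 := ((1 + G1 + G2) * (1 + H1 + H2) + (1 + G2) * H1 * H2) / (G2 * (1 + G1 + G2) * (1 + H1))) in *.
  set (d2 := (1 + G1) * (1 + H2) / G2) in *.
  assert (d1p : 0 < d1). { unfold d1. pos. }
  assert (d2p : 0 < d2). { unfold d2. pos. }
  assert (e2 : G2 * d2 = (1+G1)*(1+H2)) by (unfold d2; field; lra).
  assert (e1 : G2 * (1 + G1 + G2) * (1 + H1) * d1 = (1 + G1 + G2) * (1 + H1 + H2) + (1 + G2) * H1 * H2)
    by (unfold d1; field; repeat split; apply Rgt_not_eq; pos).
  assert (d12 : d1 < d2).
  { apply (Rmult_lt_reg_l (G2 * (1 + G1 + G2) * (1 + H1))); [pos|].
    rewrite e1. replace (G2 * (1 + G1 + G2) * (1 + H1) * d2) with ((1 + G1 + G2) * (1 + H1) * (G2*d2)) by ring.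
    rewrite e2.
    assert (0 < (1+G1+G2)*G1*(1+H1+H2) + H1*H2*(G1+G1*(1+G1+G2))) by pos.
    assert ((1 + G1 + G2) * (1 + H1) * ((1 + G1) * (1 + H2)) - ((1 + G1 + G2) * (1 + H1 + H2) + (1 + G2) * H1 * H2)
       = (1+G1+G2)*G1*(1+H1+H2) + H1*H2*(G1+G1*(1+G1+G2))) by ring. lra. }
  assert (M1 : 0 < (G1+G2)*d1 - (1+H2)).
  { apply (Rmult_lt_reg_l (G2 * (1 + G1 + G2) * (1 + H1))); [pos|].
    replace (G2 * (1 + G1 + G2) * (1 + H1) * ((G1+G2)*d1 - (1+H2))) with
      ((G1+G2) * (G2 * (1 + G1 + G2) * (1 + H1) * d1) - G2 * (1 + G1 + G2) * (1 + H1) * (1+H2)) by ring.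
    rewrite e1.
    assert (0 < G1*(1+G1+G2)*(1+H1+H2) + G1*H1*H2) by pos.
    assert ((G1 + G2) * ((1 + G1 + G2) * (1 + H1 + H2) + (1 + G2) * H1 * H2) -
      G2 * (1 + G1 + G2) * (1 + H1) * (1 + H2) = G1*(1+G1+G2)*(1+H1+H2) + G1*H1*H2) by ring.
    lra. }
  assert (Mmono : forall d, d1 <= d -> 0 < (G1+G2)*d - (1+H2)) by (intros; nra).
  assert (Dcmp : forall d, d1 <= d ->
     G1 * (((1 + H1) * d + (1 + H1 + H2)) / ((G1 + G2) * d - (1 + H2))) - (1+G2)*(1+H1)
     = - ((1+H1)*G2*(1+G1+G2)*(d - d1)) / ((G1 + G2) * d - (1 + H2))).
  { intros d hd. pose proof (Mmono d hd). unfold d1. field.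
    repeat split; apply Rgt_not_eq; first [lra | pos]. }
  assert (Dle : forall d, d1 <= d ->
     G1 * (((1 + H1) * d + (1 + H1 + H2)) / ((G1 + G2) * d - (1 + H2))) <= (1+G2)*(1+H1)).
  { intros d hd. pose proof (Dcmp d hd). pose proof (Mmono d hd).
    assert (0 <= ((1+H1)*G2*(1+G1+G2)*(d - d1)) / ((G1 + G2) * d - (1 + H2))).
    { apply Rdiv_le_0_compat; [|lra]. apply Rmult_le_pos; [left; pos | lra]. }
    unfold Rdiv in *. lra. }
  assert (Dz : G1 * (((1 + H1) * d1 + (1 + H1 + H2)) / ((G1 + G2) * d1 - (1 + H2))) = (1+G2)*(1+H1)).
  { pose proof (Dcmp d1 (Rle_refl _)) as hh. replace (d1 - d1) with 0 in hh by ring.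
    rewrite Rmult_0_r, Ropp_0 in hh. unfold Rdiv at 2 in hh. rewrite Rmult_0_l in hh. lra. }
  assert (G2d1 : G2 * d1 <= (1+G1)*(1+H2)) by (rewrite <- e2; apply Rmult_le_compat_l; lra).
  split; [|split].
  - intros hc. split.
    + apply W; auto. apply Mmono; lra. left. split; [|split; [exact e2| apply Dle; lra]].
      destruct (Rle_dec 0 (H1 * (1 + H1) - H2 * (1 + H1 + G1 + G2))) as [k|k].
      * assert (0 <= (H1 * (1 + H1) - H2 * (1 + H1 + G1 + G2)) * d2^2) by (apply Rmult_le_pos; [lra|apply pow2_ge_0]).
        assert (0 < 2 * H1 * (1 + H1) * d2) by pos. lra.
      * assert (k' : H1 * (1 + H1) - H2 * (1 + H1 + G1 + G2) < 0) by lra.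
        destruct (Q k' Bp Cp) as [_ [_ [Q3 _]]]. apply Q3; auto. destruct hc; lra.
    + assert (ee : (G1 + G2) * d2 - (1 + H2) = G1 * (d2 + (1 + H2))).
      { assert ((G1 + G2) * d2 - (1 + H2) - G1 * (d2 + (1 + H2)) = G2*d2 - (1+G1)*(1+H2)) by ring. lra. }
      rewrite ee. reflexivity.
  - intros [k [hd3 hd31]].
    split.
    + apply W; auto. right; left. split; [|split; [exact Dz|exact G2d1]].
      destruct (Q k Bp Cp) as [_ [_ [_ Q4]]]. apply Q4; lra.
    + apply (Rmult_eq_reg_l G1); [|lra]. rewrite Dz. field. lra.
  - intros [k [hd3 hd32]].
    destruct (Q k Bp Cp) as [d3p [P3 _]].
    apply W; auto. right; right. split; [exact P3|split; [|apply Dle; lra]].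
    rewrite <- e2; apply Rmult_le_compat_l; lra.
Qed.
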